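(* Let $\omega=\frac12(-1+\sqrt3\,i)\in\mathbb{C}$. With relations ordered $\mathcal R_0,\dots,\mathcal R_5$ as in the context, and for a suitable ordering $E_0,\dots,E_5$ of the primitive idempotents (with $E_0=\frac1{|\Phi|}J$), the character tables (rows $E_i$, columns $\mathcal R_j$), followed by the multiplicities $m_i$, are as follows. For $\mathcal X(GU(2,2),\Phi(2,2))$: rows $(1,1,1,2,2,2)$, $(1,\omega,\bar\omega,2,2\bar\omega,2\omega)$, $(1,\bar\omega,\omega,2,2\omega,2\bar\omega)$, $(1,1,1,-1,-1,-1)$, $(1,\omega,\bar\omega,-1,-\bar\omega,-\omega)$, $(1,\bar\omega,\omega,-1,-\omega,-\bar\omega)$, with multiplicities $1,1,1,2,2,2$. For $\mathcal X(GU(3,2),\Phi(3,2))$: rows $(1,1,1,8,8,8)$, $(1,\omega,\bar\omega,-4,-4\bar\omega,-4\omega)$, $(1,\bar\omega,\omega,-4,-4\omega,-4\bar\omega)$, $(1,1,1,-1,-1,-1)$, $(1,\omega,\bar\omega,2,2\bar\omega,2\omega)$, $(1,\bar\omega,\omega,2,2\omega,2\bar\omega)$, with multiplicities $1,3,3,8,6,6$.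
   Context: Let $\Phi=\Phi(n,2)=\{x\in\mathbb{F}_4^n\setminus\{0\}:\langle x,x\rangle=0\}$ with $\langle x,y\rangle=\sum_k x_ky_k^{2}$, and let $\mathcal X(GU(n,2),\Phi(n,2))$ be the association scheme of orbitals of $GU(n,2)$ acting on $\Phi$ by $x\mapsto xU$. Fix a primitive element $\alpha$ of $\mathbb{F}_4$. For $n\in\{2,3\}$ the relations are $\mathcal R_l=\{(x,y):y=\alpha^lx\}$ for $l=0,1,2$ and $\mathcal R_l=\{(x,y):\langle x,y\rangle=\alpha^{l}\}$ for $l=3,4,5$. For a commutative association scheme with adjacency matrices $A_0,\dots,A_d$ and primitive idempotents $E_0,\dots,E_d$ of its Bose–Mesner algebra, the character table (first eigenmatrix) is $P=[p_j(i)]$ where $A_j=\sum_i p_j(i)E_i$; the multiplicity $m_i$ is the rank of $E_i$. *)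

(* Defs.v *)
From HB Require Import structures.
From mathcomp Require Import all_boot all_order all_algebra all_field.
Set Implicit Arguments. Unset Strict Implicit. Unset Printing Implicit Defensive.
Import Order.TTheory GRing.Theory Num.Theory.
Local Open Scope ring_scope.

(* Hermitian form <x,y> = sum_k x_k y_k^2 on F^n, F a field of order 4 *)
Definition herm (F : finFieldType) (n : nat) (x y : 'rV[F]_n) : F :=
  \sum_(k < n) x 0 k * (y 0 k) ^+ 2.

Definition isotropic (F : finFieldType) (n : nat) : pred 'rV[F]_n :=
  fun x => (x != 0) && (herm x x == 0).

Definition Phi (F : finFieldType) (n : nat) := {x : 'rV[F]_n | isotropic x}.

Definition Rel (F : finFieldType) (n : nat) (a : F) (l : 'I_6)
  (x y : Phi F n) : bool :=
  if (l < 3)%N then val y == a ^+ l *: val x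
  else herm (val x) (val y) == a ^+ l.

Definition adj (F : finFieldType) (n : nat) (a : F) (l : 'I_6)
  : 'M[algC]_#|{: Phi F n}| :=
  \matrix_(i, j) (Rel a l (enum_val i) (enum_val j))%:R.

Definition in_BM (F : finFieldType) (n : nat) (a : F) (M : 'M[algC]_#|{: Phi F n}|)
  : Prop := exists c : 'I_6 -> algC, M = \sum_(j < 6) c j *: @adj F n a j.

Definition idem N (M : 'M[algC]_N) : Prop := M *m M = M.

Definition primitive_idem (F : finFieldType) (n : nat) (a : F)
  (E : 'M[algC]_#|{: Phi F n}|) : Prop :=
  [/\ @in_BM F n a E, idem E, E != 0 &
   forall G, @in_BM F n a G -> idem G -> G *m E = G -> G = 0 \/ G = E].

Definition has_char_table (F : finFieldType) (n : nat) (a : F)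
  (P : 'I_6 -> 'I_6 -> algC) (m : 'I_6 -> nat) : Prop :=
  exists E : 'I_6 -> 'M[algC]_#|{: Phi F n}|,
    (forall i, @primitive_idem F n a (E i)) /\
    (forall i j, i != j -> E i *m E j = 0) /\
    \sum_(i < 6) E i = 1%:M /\
    E 0 = (#|{: Phi F n}|%:R)^-1 *: const_mx 1 /\
    (forall j, @adj F n a j = \sum_(i < 6) P i j *: E i) /\
    (forall i, \rank (E i) = m i).

Definition omega : algC := (-1 + sqrtC 3 * 'i) / 2.
Definition omegab : algC := omega^*.

Definition tbl (s : seq (seq algC)) (i j : 'I_6) : algC := nth 0 (nth [::] s i) j.
Definition mults (s : seq nat) (i : 'I_6) : nat := nth 0%N s i.

Definition P_GU2 : seq (seq algC) :=
  [:: [:: 1; 1; 1; 2; 2; 2];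
      [:: 1; omega; omegab; 2; 2 * omegab; 2 * omega];
      [:: 1; omegab; omega; 2; 2 * omega; 2 * omegab];
      [:: 1; 1; 1; -1; -1; -1];
      [:: 1; omega; omegab; -1; - omegab; - omega];
      [:: 1; omegab; omega; -1; - omega; - omegab]].
Definition m_GU2 : seq nat := [:: 1; 1; 1; 2; 2; 2]%N.

Definition P_GU3 : seq (seq algC) :=
  [:: [:: 1; 1; 1; 8; 8; 8];
      [:: 1; omega; omegab; -4; -4 * omegab; -4 * omega];
      [:: 1; omegab; omega; -4; -4 * omega; -4 * omegab];
      [:: 1; 1; 1; -1; -1; -1];
      [:: 1; omega; omegab; 2; 2 * omegab; 2 * omega];
      [:: 1; omegab; omega; 2; 2 * omega; 2 * omegab]].
Definition m_GU3 : seq nat := [:: 1; 3; 3; 8; 6; 6]%N.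

(* Main.v *)
Require Import Defs.
From HB Require Import structures.
From mathcomp Require Import all_boot all_order all_algebra all_field.
From mathcomp Require Import ring.
Import Order.TTheory GRing.Theory Num.Theory.
Set Implicit Arguments. Unset Strict Implicit. Unset Printing Implicit Defensive.

(* Concrete model of F_4 (codes 0,1,2,3 for 0,1,a,a^2). *)
Definition nrm (k : nat) : nat := match k with 0 => 0 | 1 => 1 | 2 => 2 | _ => 3 end.
Definition addT (u v : nat) : nat :=
  match nrm u, nrm v with
  | 0, y => y | x, 0 => x
  | 1, 1 => 0 | 1, 2 => 3 | 1, _ => 2
  | 2, 1 => 3 | 2, 2 => 0 | 2, _ => 1
  | _, 1 => 2 | _, 2 => 1 | _, _ => 0 end.
Definition mulT (u v : nat) : nat :=
  match nrm u, nrm v with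
  | 0, _ => 0 | _, 0 => 0 | 1, y => y | x, 1 => x
  | 2, 2 => 3 | 2, _ => 1 | _, 2 => 1 | _, _ => 2 end.
Definition sqT u := mulT u u.
Definition hermL n (c d : seq nat) : nat :=
  foldr addT 0 [seq mulT (nth 0 c k) (sqT (nth 0 d k)) | k <- iota 0 n].
Definition isoL n (c : seq nat) := (c != nseq n 0) && (hermL n c c == 0).
Definition pw (l : nat) : nat := match l %% 3 with 0 => 1 | 1 => 2 | _ => 3 end.
Definition RelL n (l : nat) (c d : seq nat) : bool :=
  if l < 3 then d == map (mulT (pw l)) c else hermL n c d == pw l.
Fixpoint allcodes n : seq (seq nat) :=
  if n is n'.+1 then [seq k :: c | k <- iota 0 4, c <- allcodes n'] else [:: [::]].
Definition Lc n := filter (isoL n) (allcodes n).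
Definition prodcheck n j k (ws : seq nat) :=
  all (fun cx => all (fun cz => count (fun c => RelL n j cx c && RelL n k c cz) (Lc n)
     == sumn [seq nth 0 ws l * RelL n l cx cz | l <- iota 0 6]) (Lc n)) (Lc n).
Definition partcheck n := all (fun c => all (fun d => sumn [seq nat_of_bool (RelL n l c d) | l <- iota 0 6] == 1) (Lc n)) (Lc n).
Definition trcheck n := all (fun l => all (fun c => ~~ RelL n l c c) (Lc n)) (iota 1 5).


Local Open Scope ring_scope.

Section FF.
Variables (F : finFieldType) (a : F).
Hypotheses (h4 : #|F| = 4%N) (ha3 : a ^+ 3 = 1) (ha1 : a != 1).

Lemma a0 : a != 0.
Proof. apply/eqP => a0; move: ha3; rewrite a0 expr0n /= => /eqP; by rewrite eq_sym oner_eq0. Qed.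

Lemma c2 : 1 + 1 = 0 :> F.
Proof.
have : (2%N \in [pchar F]) by apply: (card_finPcharP (n := 2)).
by move/pcharf0; rewrite -natr1 => /=; rewrite natr1.
Qed.

Lemma sum3 : 1 + a + a ^+ 2 = 0.
Proof.
have : (a - 1) * (1 + a + a ^+ 2) = 0.
  have -> : (a - 1) * (1 + a + a ^+ 2) = a ^+ 3 - 1 by ring.
  by rewrite ha3 subrr.
move/eqP; rewrite mulf_eq0 => /orP [|/eqP //].
by rewrite subr_eq0 (negbTE ha1).
Qed.

Lemma oppF (x : F) : - x = x.
Proof.
have h : x + x = 0 by rewrite -[x]mulr1 -mulrDr c2 mulr0.
by apply/eqP; rewrite eq_sym -subr_eq0 opprK h.
Qed.


Lemma eqF (x y : F) : x + y = 0 -> x = y.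
Proof. by move=> h; apply/eqP; rewrite -subr_eq0 oppF h. Qed.

Lemma Fxx (x : F) : x + x = 0.
Proof. by rewrite -[x]mulr1 -mulrDr c2 mulr0. Qed.
Lemma F1a : 1 + a = a ^+ 2. Proof. by apply: eqF; rewrite sum3. Qed.
Lemma Fa1 : a + 1 = a ^+ 2. Proof. by rewrite addrC F1a. Qed.
Lemma F12 : 1 + a ^+ 2 = a. Proof. by apply: eqF; rewrite -sum3; ring. Qed.
Lemma F21 : a ^+ 2 + 1 = a. Proof. by rewrite addrC F12. Qed.
Lemma Fa2 : a + a ^+ 2 = 1. Proof. by apply: eqF; rewrite -sum3; ring. Qed.
Lemma F2a : a ^+ 2 + a = 1. Proof. by rewrite addrC Fa2. Qed.
Lemma Maa : a * a = a ^+ 2. Proof. by rewrite expr2. Qed.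
Lemma Ma2 : a * a ^+ 2 = 1. Proof. by rewrite -exprS ha3. Qed.
Lemma M2a : a ^+ 2 * a = 1. Proof. by rewrite mulrC Ma2. Qed.
Lemma M22 : a ^+ 2 * a ^+ 2 = a.
Proof.
by rewrite -exprD (_ : (2 + 2 = 3 + 1)%N) // exprD ha3 mul1r expr1.
Qed.

Lemma a20 : a ^+ 2 != 0. Proof. by rewrite expf_neq0 // a0. Qed.
Lemma a21 : a ^+ 2 != 1.
Proof. by apply: contraNneq ha1 => h; rewrite -Ma2 h mulr1. Qed.
Lemma a2a : a ^+ 2 != a.
Proof.
apply: contraNneq ha1 => h; apply/eqP; apply: (mulfI a0); by rewrite mulr1 Maa h.
Qed.

Lemma allF (x : F) : [|| x == 0, x == 1, x == a | x == a ^+ 2].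
Proof.
set s := [:: 0; 1; a; a ^+ 2].
have us : uniq s.
  rewrite /s /= !inE !negb_or eq_sym oner_eq0 eq_sym a0 eq_sym a20.
  by rewrite eq_sym ha1 eq_sym a21 eq_sym a2a.
apply/negPn/negP => hx.
have ux : uniq (x :: s).
  by rewrite cons_uniq us andbT /s !inE.
have := max_card (mem (x :: s)).
by rewrite h4 (card_uniqP ux).
Qed.

Definition enc (k : nat) : F :=
  match k with 0 => 0 | 1 => 1 | 2 => a | _ => a ^+ 2 end.
Definition dec (x : F) : nat :=
  if x == 0 then 0 else if x == 1 then 1 else if x == a then 2 else 3.

Lemma enc_dec x : enc (dec x) = x.
Proof.
rewrite /dec; have := allF x; case/or4P => /eqP ->; rewrite ?eqxx ?oner_eq0 //.
  by rewrite (negbTE a0) (negbTE ha1).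
by rewrite (negbTE a20) (negbTE a21) (negbTE a2a).
Qed.

Lemma dec_lt4 x : (dec x < 4)%N.
Proof. by rewrite /dec; repeat case: ifP. Qed.

Lemma dec_enc k : (k < 4)%N -> dec (enc k) = k.
Proof.
case: k => [|[|[|[|//]]]] _; rewrite /dec /= ?eqxx ?oner_eq0 //.
  by rewrite (negbTE a0) (negbTE ha1).
by rewrite (negbTE a20) (negbTE a21) (negbTE a2a).
Qed.

Lemma enc_nrm k : enc (nrm k) = enc k.
Proof. by case: k => [|[|[|[|k]]]]. Qed.

Lemma nrm_lt4 k : (nrm k < 4)%N.
Proof. by case: k => [|[|[|[|k]]]]. Qed.

Lemma enc_inj u v : (u < 4)%N -> (v < 4)%N -> (enc u == enc v) = (u == v).
Proof.
move=> hu hv; apply/eqP/eqP => [h|-> //].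
by rewrite -(dec_enc hu) h dec_enc.
Qed.

Lemma encD u v : enc (addT u v) = enc u + enc v.
Proof.
case: u => [|[|[|[|u]]]]; case: v => [|[|[|[|v]]]];
  rewrite /= ?add0r ?addr0 ?Fxx ?F1a ?Fa1 ?F12 ?F21 ?Fa2 ?F2a //.
Qed.

Lemma encM u v : enc (mulT u v) = enc u * enc v.
Proof.
case: u => [|[|[|[|u]]]]; case: v => [|[|[|[|v]]]];
  rewrite /= ?mul0r ?mulr0 ?mul1r ?mulr1 ?Maa ?Ma2 ?M2a ?M22 //.
Qed.


Lemma addT_lt4 u v : (addT u v < 4)%N.
Proof. by case: u => [|[|[|[|u]]]]; case: v => [|[|[|[|v]]]]. Qed.
Lemma mulT_lt4 u v : (mulT u v < 4)%N.
Proof. by case: u => [|[|[|[|u]]]]; case: v => [|[|[|[|v]]]]. Qed.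
Lemma mulT0 p : mulT p 0 = 0%N.
Proof. by case: p => [|[|[|[|p]]]]. Qed.

Lemma enc_pw l : enc (pw l) = a ^+ l.
Proof.
rewrite {2}(divn_eq l 3) exprD mulnC exprM ha3 expr1n mul1r /pw.
have : (l %% 3 < 3)%N by rewrite ltn_pmod.
by case: (l %% 3)%N => [|[|[|]]].
Qed.
Lemma pw_lt4 l : (pw l < 4)%N.
Proof. by rewrite /pw; case: (l %% 3)%N => [|[|[|]]]. Qed.

Definition encL n (c : seq nat) : 'rV[F]_n := \row_(k < n) enc (nth 0 c k).
Definition decL n (x : 'rV[F]_n) : seq nat := [seq dec (x 0 k) | k <- enum 'I_n].
Definition valid n (c : seq nat) := (size c == n) && all (fun k => k < 4)%N c.

Lemma decL_valid n (x : 'rV[F]_n) : valid n (decL x).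
Proof.
rewrite /valid /decL size_map size_enum_ord eqxx /=.
by apply/allP => k /mapP [i _ ->]; apply: dec_lt4.
Qed.

Lemma encL_decL n (x : 'rV[F]_n) : encL n (decL x) = x.
Proof.
apply/rowP => k; rewrite mxE /decL (nth_map k) ?size_enum_ord //.
by rewrite nth_ord_enum enc_dec.
Qed.

Lemma decL_encL n c : valid n c -> decL (encL n c) = c.
Proof.
case/andP => /eqP hs ha; rewrite /decL.
have -> : [seq dec (encL n c 0 k) | k <- enum 'I_n] = [seq nth 0 c k | k <- iota 0 n].
  rewrite -val_enum_ord -map_comp; apply: eq_map => k /=.
  by rewrite mxE dec_enc //; apply: (allP ha); rewrite mem_nth // hs.
by rewrite -hs -/(mkseq _ _) mkseq_nth.
Qed.

Lemma encL_inj n c d : valid n c -> valid n d -> (encL n c == encL n d) = (c == d).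
Proof.
move=> hc hd; apply/eqP/eqP => [h|-> //].
by rewrite -(decL_encL hc) h decL_encL.
Qed.

Lemma enc_foldr s : enc (foldr addT 0 s) = \sum_(v <- s) enc v.
Proof. by elim: s => [|v s IH]; rewrite ?big_nil ?big_cons //= encD IH. Qed.

Lemma foldr_lt4 s : (foldr addT 0 s < 4)%N.
Proof. by case: s => [|v s] //=; apply: addT_lt4. Qed.

Lemma herm_enc n c d : herm (encL n c) (encL n d) = enc (hermL n c d).
Proof.
rewrite /hermL enc_foldr big_map.
have -> : iota 0 n = index_iota 0 n by rewrite /index_iota subn0.
rewrite big_mkord.
by apply: eq_bigr => k _; rewrite !mxE encM /sqT encM expr2.
Qed.

Lemma nth_map0 f (c : seq nat) k : f 0%N = 0%N -> nth 0 (map f c) k = f (nth 0 c k).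
Proof.
move=> f0; case: (ltnP k (size c)) => h; first by rewrite (nth_map 0).
by rewrite !nth_default ?size_map.
Qed.

Lemma encL_scale n p c : encL n (map (mulT p) c) = enc p *: encL n c.
Proof. by apply/rowP => k; rewrite !mxE nth_map0 ?mulT0 // encM. Qed.

Lemma valid_scale n p c : valid n c -> valid n (map (mulT p) c).
Proof.
case/andP => hs _; rewrite /valid size_map hs /=.
by apply/allP => k /mapP [x _ ->]; apply: mulT_lt4.
Qed.

Definition RelV n (l : nat) (x y : 'rV[F]_n) : bool :=
  if (l < 3)%N then y == a ^+ l *: x else herm x y == a ^+ l.

Lemma RelV_enc n l c d : valid n c -> valid n d ->
  RelV l (encL n c) (encL n d) = RelL n l c d.
Proof.
move=> hc hd; rewrite /RelV /RelL; case: ifP => _.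
  by rewrite -enc_pw -encL_scale encL_inj // valid_scale.
by rewrite herm_enc -enc_pw enc_inj ?foldr_lt4 ?pw_lt4.
Qed.

Lemma valid_nseq n : valid n (nseq n 0%N).
Proof. by rewrite /valid size_nseq eqxx /=; apply/allP => k; rewrite mem_nseq => /andP [_ /eqP ->]. Qed.

Lemma iso_enc n c : valid n c -> isotropic (encL n c) = isoL n c.
Proof.
move=> hc; rewrite /isotropic /isoL herm_enc.
have -> : (0 : 'rV[F]_n) = encL n (nseq n 0%N).
  by apply/rowP => k; rewrite !mxE nth_nseq; case: ifP.
by rewrite encL_inj ?valid_nseq // -[0 : F]/(enc 0) enc_inj ?foldr_lt4.
Qed.

Lemma allcodesS n : allcodes n.+1 = [seq k :: c | k <- iota 0 4, c <- allcodes n].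
Proof. by []. Qed.

Lemma mem_allcodes n c : (c \in allcodes n) = valid n c.
Proof.
elim: n c => [|n IH] [|k c] //; rewrite allcodesS.
- by apply/allpairsP => -[[x y] [_ _]].
- rewrite /valid [size _]/= eqSS [all _ _]/=; apply/allpairsP/idP => [[[x y] [hx hy [-> ->]]]|].
    by move: hx hy; rewrite mem_iota IH => /= -> /andP [-> ->].
  case/andP => hs /andP [hk ha]; exists (k, c); split => //.
    by rewrite mem_iota.
  by rewrite IH /valid hs ha.
Qed.

Lemma mem_Lc n c : (c \in Lc n) = isoL n c && valid n c.
Proof. by rewrite mem_filter mem_allcodes. Qed.

Lemma perm_Phi n : uniq (Lc n) ->
  perm_eq (map val (enum {: Phi F n})) (map (encL n) (Lc n)).
Proof.
move=> hu; apply: uniq_perm.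
- by rewrite map_inj_uniq ?enum_uniq //; apply: val_inj.
- rewrite map_inj_in_uniq // => c d; rewrite !mem_Lc => /andP [_ hc] /andP [_ hd].
  by move/eqP; rewrite encL_inj // => /eqP.
move=> x; have -> : (x \in map val (enum {: Phi F n})) = isotropic x.
  apply/mapP/idP => [[y _ ->]|h]; first exact: (valP y).
  by exists (exist _ x h); rewrite ?mem_enum.
apply/idP/mapP => [h|[c hc ->]].
  exists (decL x); last by rewrite encL_decL.
  by rewrite mem_Lc decL_valid -iso_enc ?decL_valid // encL_decL h.
by move: hc; rewrite mem_Lc => /andP [h1 h2]; rewrite iso_enc.
Qed.

Lemma card_Phi n : uniq (Lc n) -> #|{: Phi F n}| = size (Lc n).
Proof. by move=> hu; rewrite cardE -(size_map val) (perm_size (perm_Phi hu)) size_map. Qed.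

Lemma sum_Phi n (g : 'rV[F]_n -> algC) : uniq (Lc n) ->
  \sum_(i < #|{: Phi F n}|) g (val (enum_val i)) = \sum_(c <- Lc n) g (encL n c).
Proof.
move=> hu.
rewrite -(big_enum_val (fun y : Phi F n => g (val y))) /= -big_enum.
by rewrite -(big_map val xpredT g) (perm_big _ (perm_Phi hu)) big_map.
Qed.


Lemma ev_Lc n (i : 'I_#|{: Phi F n}|) : decL (val (enum_val i)) \in Lc n.
Proof.
rewrite mem_Lc decL_valid andbT -iso_enc ?decL_valid // encL_decL.
exact: valP.
Qed.

Lemma sum_count (s : seq (seq nat)) (P : pred (seq nat)) :
  \sum_(c <- s) ((P c : nat)%:R : algC) = (count P s)%:R.
Proof.
elim: s => [|c s IH]; rewrite ?big_nil ?big_cons //= IH natrD; reflexivity.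
Qed.

Lemma sum6 (G : nat -> nat) :
  \sum_(l < 6) ((G l)%:R : algC) = (sumn [seq G l | l <- iota 0 6])%:R.
Proof.
by rewrite -(big_mkord xpredT (fun l => (G l)%:R)) -natr_sum sumnE big_map.
Qed.

Lemma adj0 n : adj n a (0 : 'I_6) = 1%:M :> 'M_#|{: Phi F n}|.
Proof.
apply/matrixP => i j; rewrite !mxE /Rel /= scale1r.
by rewrite (inj_eq val_inj) (inj_eq enum_val_inj) eq_sym.
Qed.

Lemma prod_adj n (j k : 'I_6) ws : uniq (Lc n) -> prodcheck n j k ws ->
  adj n a j *m adj n a k = \sum_(l < 6) (nth 0%N ws l)%:R *: adj n a l.
Proof.
move=> hu hp; apply/matrixP => i m; rewrite !mxE summxE.
rewrite (eq_bigr (fun t => (RelV j (val (enum_val i)) (val (enum_val t)))%:R *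
   (RelV k (val (enum_val t)) (val (enum_val m)))%:R)); last by move=> t _; rewrite !mxE.
rewrite [RHS](eq_bigr (fun l : 'I_6 => (nth 0%N ws l)%:R *
   (RelV l (val (enum_val i)) (val (enum_val m)))%:R)); last by move=> l _; rewrite !mxE.
rewrite (sum_Phi (fun y => (RelV j (val (enum_val i)) y)%:R * (RelV k y (val (enum_val m)))%:R)) //.
have hi := ev_Lc i; have hm := ev_Lc m.
move: hi hm; rewrite -{2}(encL_decL (val (enum_val i))) -{2}(encL_decL (val (enum_val m))).
rewrite -[in RHS](encL_decL (val (enum_val i))) -[in RHS](encL_decL (val (enum_val m))).
set cx := decL _; set cz := decL _ => hi hm.
move: (hi) (hm); rewrite !mem_Lc => /andP [_ vx] /andP [_ vz].
rewrite (eq_big_seq (fun c => ((RelL n j cx c && RelL n k c cz : nat)%:R : algC))); last first.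
  move=> c hc; move: (hc); rewrite !mem_Lc => /andP [_ vc].
  by rewrite !RelV_enc // -natrM mulnb.
rewrite sum_count.
rewrite (eq_bigr (fun l : 'I_6 => ((nth 0%N ws l * RelL n l cx cz)%N)%:R)); last first.
  by move=> l _; rewrite RelV_enc // natrM.
rewrite (sum6 (fun l => nth 0%N ws l * RelL n l cx cz)%N).
by have := allP (allP hp cx hi) cz hm => /eqP ->.
Qed.

Lemma sum_adj n : uniq (Lc n) -> partcheck n ->
  \sum_(l < 6) adj n a l = const_mx 1 :> 'M_#|{: Phi F n}|.
Proof.
move=> hu hp; apply/matrixP => i m; rewrite !mxE summxE.
have hi := ev_Lc i; have hm := ev_Lc m.
rewrite (eq_bigr (fun l : 'I_6 => ((RelL n l (decL (val (enum_val i))) (decL (val (enum_val m))) : nat))%:R)); last first.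
  move=> l _; rewrite !mxE.
  move: (hi) (hm); rewrite !mem_Lc => /andP [_ vx] /andP [_ vz].
  by rewrite -RelV_enc // !encL_decL.
rewrite (sum6 (fun l => (RelL n l (decL (val (enum_val i))) (decL (val (enum_val m))) : nat))).
by have := allP (allP hp _ hi) _ hm => /eqP ->.
Qed.

Lemma tr_adj n (l : 'I_6) : uniq (Lc n) -> trcheck n -> l != 0 :> 'I_6 ->
  \tr (adj n a l : 'M_#|{: Phi F n}|) = 0.
Proof.
move=> hu ht hl; rewrite /mxtrace.
rewrite (eq_bigr (fun i => (RelV l (val (enum_val i)) (val (enum_val i)))%:R)); last first.
  by move=> i _; rewrite mxE.
rewrite (sum_Phi (fun y => (RelV l y y)%:R)) //.
rewrite big_seq big1 // => c hc; move: (hc); rewrite mem_Lc => /andP [_ vc].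
rewrite RelV_enc //.
have hl' : (l : nat) \in iota 1 5.
  rewrite mem_iota; case: l hl => [[|k] hk] //= _.
by rewrite (negbTE (allP (allP ht _ hl') c hc)).
Qed.

End FF.

Lemma scalerCA' (R : comNzRingType) (V : lmodType R) (p q : R) (v : V) :
  p *: (q *: v) = q *: (p *: v).
Proof. by rewrite !scalerA mulrC. Qed.

Lemma scaleDl' (R : pzRingType) (V : lmodType R) (p q : R) (v : V) :
  (p + q) *: v = p *: v + q *: v.
Proof. exact: scalerDl. Qed.

Lemma rank_idem_tr (K : fieldType) m (E : 'M[K]_m) :
  E *m E = E -> (\rank E)%:R = \tr E.
Proof.
move=> hE.
set B := row_base E.
set C := E *m pinvmx B.
have hCB : C *m B = E by rewrite /C mulmxKpV // eq_row_base submx_refl.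
have rC : \rank C = \rank E.
  apply/eqP; rewrite eqn_leq rank_leq_col /= -{1}hCB mxrankM_maxl.
  done.
have fB : row_free B by apply: row_base_free.
clearbody C B.
have hCBC : C *m (B *m C) = C *m 1%:M.
  apply: (row_free_inj fB) => /=.
  by rewrite mulmx1 !mulmxA hCB -mulmxA hCB hE.
have hBC : B *m C = 1%:M.
  have fr : row_free C^T by rewrite /row_free mxrank_tr rC.
  have : (B *m C)^T *m C^T = (1%:M)^T *m C^T by rewrite -!trmx_mul hCBC.
  by move/(row_free_inj fr)/trmx_inj.
have := congr1 mxtrace hCB; rewrite mxtrace_mulC hBC mxtrace1 => <- //.
Qed.

Section Alg.
Variables (F : finFieldType) (n : nat) (a : F).
Local Notation N := #|{: Phi F n}|.
Local Notation M := 'M[algC]_N.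
Local Notation A := (adj n a).
Local Notation S := (A 1).
Local Notation T := (A 3).
Variables (w : algC) (c0 c2 : nat) (t0 t0' t1 t1' : algC).
Hypotheses (hw3 : w ^+ 3 = 1) (hw1 : w != 1).
Hypotheses (hA0 : A 0 = 1%:M) (hA2 : S *m S = A 2) (hS3 : S *m A 2 = 1%:M)
  (hA5 : T *m S = A 5) (hA4 : T *m A 2 = A 4) (hC : S *m T = A 5)
  (hT2 : T *m T = c0%:R *: 1%:M + T + c2%:R *: (A 4 + A 5)).

Definition u (x : algC) : M := 3^-1 *: (1%:M + x ^+ 2 *: S + x *: A 2).

Lemma Su x : x ^+ 3 = 1 -> S *m u x = x *: u x.
Proof.
move=> hx; rewrite /u -scalemxAr [RHS]scalerCA'; congr (_ *: _).
rewrite !mulmxDr mulmx1 -!scalemxAr hA2 hS3 !scalerDr !scalerA -exprS hx scale1r.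
by rewrite -expr2 scalemx1 addrC addrA.
Qed.

Lemma TS : T *m S = S *m T. Proof. by rewrite hA5 hC. Qed.
Lemma TA2 : T *m A 2 = A 2 *m T.
Proof. by rewrite -hA2 mulmxA TS -mulmxA TS mulmxA. Qed.

Lemma Tu x : T *m u x = u x *m T.
Proof.
rewrite /u -scalemxAr -scalemxAl; congr (_ *: _).
by rewrite !mulmxDr !mulmxDl mulmx1 mul1mx -!scalemxAr -!scalemxAl TS TA2.
Qed.

Lemma Su_comm x : S *m u x = u x *m S.
Proof.
rewrite /u -scalemxAr -scalemxAl; congr (_ *: _).
by rewrite !mulmxDr !mulmxDl mulmx1 mul1mx -!scalemxAr -!scalemxAl -hA2 mulmxA.
Qed.

Lemma uS x : x ^+ 3 = 1 -> u x *m S = x *: u x.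
Proof. by move=> hx; rewrite -Su_comm Su. Qed.

Lemma uA2 x : x ^+ 3 = 1 -> u x *m A 2 = x ^+ 2 *: u x.
Proof.
by move=> hx; rewrite -hA2 mulmxA uS // -scalemxAl uS // scalerA -expr2.
Qed.

Lemma Tu_q x t q : x ^+ 3 = 1 -> t + q = 1 + c2%:R * (x ^+ 2 + x) -> t * q = - c0%:R ->
  T *m (u x *m (T - q%:M)) = t *: (u x *m (T - q%:M)).
Proof.
move=> hx hs hp.
have h1 := Tu x; have h2 := uS hx; have h3 := uA2 hx.
move: (u x) h1 h2 h3 => U h1 h2 h3.
have e1 : T *m (U *m T) = U *m (T *m T) by rewrite mulmxA h1 -mulmxA.
have e2 : U *m A 4 = x ^+ 2 *: (U *m T).
  by rewrite -hA4 mulmxA -h1 -mulmxA h3 -scalemxAr h1.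
have e3 : U *m A 5 = x *: (U *m T).
  by rewrite -hA5 mulmxA -h1 -mulmxA h2 -scalemxAr h1.
rewrite !mulmxBr !mul_mx_scalar -scalemxAr h1 e1 hT2 !mulmxDr -!scalemxAr mulmx1 mulmxDr e2 e3.
move: (U *m T) => V.
rewrite [RHS]scalerBr scalerA hp scaleNr opprK.
have -> : t = 1 + c2%:R * (x ^+ 2 + x) - q by rewrite -hs addrK.
rewrite scalerBl [in RHS]scaleDl' scale1r -[in RHS]scalerA [in RHS]scaleDl'.
by rewrite [RHS]addrC !addrA.
Qed.



Definition sv (i : 'I_6) : algC := nth 0 [:: 1; w; w ^+ 2; 1; w; w ^+ 2] i.
Definition tv (i : 'I_6) : algC := nth 0 [:: t0; t1; t1; t0'; t1'; t1'] i.
Definition tq (i : 'I_6) : algC := nth 0 [:: t0'; t1'; t1'; t0; t1; t1] i.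
Definition EE i : M := (tv i - tq i)^-1 *: (u (sv i) *m (T - (tq i)%:M)).
Definition kk (j : 'I_6) : nat := nth 0%N [:: 0; 1; 2; 0; 2; 1]%N j.
Definition ee (j : 'I_6) : nat := nth 0%N [:: 0; 0; 0; 1; 1; 1]%N j.
Definition eig i j := sv i ^+ kk j * tv i ^+ ee j.
Definition rho (x y : algC) : algC := 3^-1 * (1 + x ^+ 2 * y + x * y ^+ 2).

Hypotheses (hq : forall i, tv i + tq i = 1 + c2%:R * (sv i ^+ 2 + sv i))
  (hp : forall i, tv i * tq i = - c0%:R) (d0 : t0 - t0' != 0) (d1 : t1 - t1' != 0).

Lemma sv3 i : sv i ^+ 3 = 1.
Proof.
by case: i => [[|[|[|[|[|[|//]]]]]] hi] /=; rewrite ?expr1n // -exprM mulnC exprM hw3 expr1n.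
Qed.

Lemma SE i : S *m EE i = sv i *: EE i.
Proof. by rewrite /EE -scalemxAr mulmxA Su ?sv3 // -scalemxAl scalerCA'. Qed.

Lemma TE i : T *m EE i = tv i *: EE i.
Proof. by rewrite /EE -scalemxAr (Tu_q (sv3 i) (hq i) (hp i)) scalerCA'. Qed.

Lemma uY x (Y : M) y : S *m Y = y *: Y -> u x *m Y = rho x y *: Y.
Proof.
move=> hY; have h2 : A 2 *m Y = y ^+ 2 *: Y.
  by rewrite -hA2 -mulmxA hY -scalemxAr hY scalerA -expr2.
rewrite /u -scalemxAl !mulmxDl mul1mx -!scalemxAl hY h2 /rho.
by apply/matrixP => r s; rewrite !mxE; ring.
Qed.

Lemma AY (j : 'I_6) (Y : M) y t : S *m Y = y *: Y -> T *m Y = t *: Y ->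
  A j *m Y = (y ^+ kk j * t ^+ ee j) *: Y.
Proof.
move=> hS hT; case: j => [[|[|[|[|[|[|//]]]]]] hj];
  rewrite /kk /ee /= ?expr0 ?expr1 ?mulr1 ?mul1r.
- by rewrite (_ : Ordinal hj = 0) ?hA0 ?mul1mx ?scale1r //; apply: val_inj.
- by rewrite (_ : Ordinal hj = 1) // ; apply: val_inj.
- by rewrite (_ : Ordinal hj = 2) -?hA2 -?mulmxA ?hS -?scalemxAr ?hS ?scalerA ?expr2 //; apply: val_inj.
- by rewrite (_ : Ordinal hj = 3) //; apply: val_inj.
- rewrite (_ : Ordinal hj = 4); last by apply: val_inj.
  rewrite -hA4 -hA2 -!mulmxA hS -scalemxAr hS -!scalemxAr hT.
  by apply/matrixP => r s; rewrite !mxE; ring.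
- rewrite (_ : Ordinal hj = 5); last by apply: val_inj.
  rewrite -hA5 -mulmxA hS -scalemxAr hT.
  by apply/matrixP => r s; rewrite !mxE; ring.
Qed.

Lemma EY j (Y : M) y t : S *m Y = y *: Y -> T *m Y = t *: Y ->
  EE j *m Y = ((tv j - tq j)^-1 * (t - tq j) * rho (sv j) y) *: Y.
Proof.
move=> hS hT; rewrite /EE -scalemxAl -mulmxA mulmxBl hT mul_scalar_mx -scalerBl.
rewrite -scalemxAr (uY _ hS).
by apply/matrixP => r s; rewrite !mxE; ring.
Qed.


Lemma rho_same x : x ^+ 3 = 1 -> rho x x = 1.
Proof.
move=> hx; rewrite /rho -exprSr -exprS hx.
by field.
Qed.

Lemma rho_diff x y : x ^+ 3 = 1 -> y ^+ 3 = 1 -> x != y -> rho x y = 0.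
Proof.
move=> hx hy hxy.
have z2 : x * y ^+ 2 = (x ^+ 2 * y) ^+ 2.
  have -> : (x ^+ 2 * y) ^+ 2 = x ^+ 3 * (x * y ^+ 2) by ring.
  by rewrite hx mul1r.
have z3 : (x ^+ 2 * y) ^+ 3 = 1.
  have -> : (x ^+ 2 * y) ^+ 3 = (x ^+ 3) ^+ 2 * y ^+ 3 by ring.
  by rewrite hx hy expr1n mulr1.
have z1 : x ^+ 2 * y != 1.
  apply: contra hxy => /eqP hz; apply/eqP.
  have : x * (x ^+ 2 * y) = x ^+ 3 * y by ring.
  by rewrite hz mulr1 hx mul1r.
rewrite /rho z2; move: (x ^+ 2 * y) z3 z1 => z z3 z1.
have : (z - 1) * (1 + z + z ^+ 2) = 0.
  have -> : (z - 1) * (1 + z + z ^+ 2) = z ^+ 3 - 1 by ring.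
  by rewrite z3 subrr.
move/eqP; rewrite mulf_eq0 subr_eq0 (negbTE z1) /= => /eqP ->.
by rewrite mulr0.
Qed.

Lemma w2_1 : w ^+ 2 != 1.
Proof.
apply: contra hw1 => /eqP h; apply/eqP.
by rewrite -hw3 exprS h mulr1.
Qed.

Lemma w_w2 : w != w ^+ 2.
Proof.
apply: contra hw1 => /eqP h.
by rewrite -hw3 exprSr -h -expr2 -h.
Qed.

Lemma w23 : (w ^+ 2) ^+ 3 = 1.
Proof. by rewrite -exprM mulnC exprM hw3 expr1n. Qed.

Lemma w4 : (w ^+ 2) ^+ 2 = w.
Proof. by rewrite -exprM (_ : (2 * 2 = 3 + 1)%N) // exprD hw3 mul1r expr1. Qed.

Lemma w2E : w ^+ 2 = -1 - w.
Proof.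
have h : (w - 1) * (w ^+ 2 + w + 1) = 0.
  have -> : (w - 1) * (w ^+ 2 + w + 1) = w ^+ 3 - 1 by ring.
  by rewrite hw3 subrr.
move/eqP: h; rewrite mulf_eq0 subr_eq0 (negbTE hw1) /= => /eqP h.
by apply: (addIr (w + 1)); rewrite addrA h; ring.
Qed.

Lemma gam i j : (tv j - tq j)^-1 * (tv i - tq j) * rho (sv j) (sv i) = (i == j)%:R.
Proof.
have r11 : rho 1 1 = 1 by rewrite rho_same ?expr1n.
have rww : rho w w = 1 by rewrite rho_same.
have r22 : rho (w ^+ 2) (w ^+ 2) = 1 by rewrite rho_same ?w23.
have r1w : rho 1 w = 0 by rewrite rho_diff ?expr1n // eq_sym.
have r12 : rho 1 (w ^+ 2) = 0 by rewrite rho_diff ?expr1n ?w23 // eq_sym w2_1.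
have rw1 : rho w 1 = 0 by rewrite rho_diff ?expr1n.
have rw2 : rho w (w ^+ 2) = 0 by rewrite rho_diff ?w23 // w_w2.
have r21 : rho (w ^+ 2) 1 = 0 by rewrite rho_diff ?expr1n ?w23 // w2_1.
have r2w : rho (w ^+ 2) w = 0 by rewrite rho_diff ?w23 // eq_sym w_w2.
have d0' : t0' - t0 != 0 by rewrite -opprB oppr_eq0.
have d1' : t1' - t1 != 0 by rewrite -opprB oppr_eq0.
case: i => [[|[|[|[|[|[|//]]]]]] hi]; case: j => [[|[|[|[|[|[|//]]]]]] hj];
  rewrite /tv /tq /sv /= ?r11 ?rww ?r22 ?r1w ?r12 ?rw1 ?rw2 ?r21 ?r2w ?mulr0 ?subrr ?mulr0 ?mul0r ?mulr1 ?mulVf //.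
Qed.

Lemma idemE i : EE i *m EE i = EE i.
Proof. by rewrite (EY _ (SE i) (TE i)) gam eqxx scale1r. Qed.

Lemma orthE i j : i != j -> EE i *m EE j = 0.
Proof. by move=> hij; rewrite (EY _ (SE j) (TE j)) gam eq_sym (negbTE hij) scale0r. Qed.

Lemma sum6M (f : 'I_6 -> M) : \sum_(i < 6) f i = f 0 + f 1 + f 2 + f 3 + f 4 + f 5.
Proof.
rewrite !big_ord_recl big_ord0 addr0 !addrA.
by congr (_ + _ + _ + _ + _ + _); apply: congr1; apply: val_inj.
Qed.

Lemma uTq x q : u x *m (T - q%:M) = 3^-1 *: (T - q *: 1%:M + x ^+ 2 *: A 5
   - (x ^+ 2 * q) *: S + x *: A 4 - (x * q) *: A 2).
Proof.
rewrite /u -scalemxAl mulmxBr mul_mx_scalar !mulmxDl mul1mx -!scalemxAl hC -TA2 hA4.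
by apply/matrixP => r s; rewrite !mxE; ring.
Qed.

Lemma pairE x t q : t - q != 0 ->
  (t - q)^-1 *: (u x *m (T - q%:M)) + (q - t)^-1 *: (u x *m (T - t%:M)) = u x.
Proof.
move=> htq; have hqt : q - t != 0 by rewrite -opprB oppr_eq0.
rewrite !mulmxBr !mul_mx_scalar; set V := u x *m T; set U := u x; clearbody V U.
apply/matrixP => r s; rewrite !mxE. field; by rewrite hqt htq.
Qed.

Lemma sumU : u 1 + u w + u (w ^+ 2) = 1%:M.
Proof.
by rewrite /u; apply/matrixP => r s; rewrite !mxE w4 w2E; field.
Qed.

Lemma sumE : \sum_(i < 6) EE i = 1%:M.
Proof.
rewrite sum6M.
have -> : EE 0 + EE 1 + EE 2 + EE 3 + EE 4 + EE 5 =
  (EE 0 + EE 3) + (EE 1 + EE 4) + (EE 2 + EE 5).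
  by apply/matrixP => r s; rewrite !mxE; ring.
by rewrite /EE /tv /tq /sv /= !pairE // sumU.
Qed.


Lemma trB (X Y : M) : \tr (X - Y) = \tr X - \tr Y.
Proof. by rewrite mxtraceD -scaleN1r mxtraceZ mulN1r. Qed.

Lemma trN (X : M) : \tr (- X) = - \tr X.
Proof. by rewrite -scaleN1r mxtraceZ mulN1r. Qed.

Lemma AE j i : A j *m EE i = eig i j *: EE i.
Proof. exact: AY (SE i) (TE i). Qed.

Theorem gen_char_table (P : 'I_6 -> 'I_6 -> algC) (m : 'I_6 -> nat) :
  \sum_(j < 6) A j = const_mx 1 ->
  (forall j : 'I_6, j != 0 -> \tr (A j) = 0) ->
  (N%:R : algC) = 3 * (t0 - t0') -> t0' = -1 ->
  (forall i, ((m i)%:R : algC) = - ((tv i - tq i)^-1 * 3^-1 * tq i * N%:R)) ->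
  (forall i, 0 < m i)%N ->
  (forall i j, P i j = eig i j) ->
  has_char_table n a P m.
Proof.
move=> hJ htr hN ht0' hm hm0 hP.
have rk i : \rank (EE i) = m i.
  apply/eqP; rewrite -(eqr_nat algC) rank_idem_tr ?idemE // hm.
  rewrite /EE uTq !(mxtraceZ, mxtraceD, trN) mxtrace1.
  rewrite !htr //.
  apply/eqP; ring.
have nz i : EE i != 0.
  by apply/negP => /eqP h; move: (hm0 i); rewrite -rk h mxrank0.
exists EE; split; [|split; [|split; [|split; [|split]]]].
- move=> i; split.
  + exists (fun j => (tv i - tq i)^-1 * 3^-1 *
       nth 0 [:: - tq i; - (sv i ^+ 2 * tq i); - (sv i * tq i); 1; sv i; sv i ^+ 2] j).
    rewrite sum6M /EE uTq hA0 /=.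
    by apply/matrixP => r s; rewrite !mxE; ring.
  + exact: idemE.
  + exact: nz.
  + move=> G [c ->] hG hGE.
    have hGE' : (\sum_(j < 6) c j *: A j) *m EE i = (\sum_(j < 6) c j * eig i j) *: EE i.
      rewrite mulmx_suml scaler_suml; apply: eq_bigr => j _.
      by rewrite -scalemxAl AE scalerA.
    have hGg : \sum_(j < 6) c j *: A j = (\sum_(j < 6) c j * eig i j) *: EE i.
      by rewrite -hGE'.
    move: hG; rewrite /idem hGg.
    move: (\sum_(j < 6) c j * eig i j) => g.
    rewrite -scalemxAl -scalemxAr idemE scalerA => /eqP.
    rewrite -subr_eq0 -scalerBl scaler_eq0 (negbTE (nz i)) orbF.
    have -> : g * g - g = g * (g - 1) by ring.
    rewrite mulf_eq0 subr_eq0 => /orP [/eqP -> | /eqP ->].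
      by left; rewrite scale0r.
    by right; rewrite scale1r.
- exact: orthE.
- exact: sumE.
- have hJ' := hJ; rewrite sum6M hA0 in hJ'.
  rewrite /EE uTq /tv /tq /sv /= ht0' hN.
  apply/matrixP => r s; move/matrixP: hJ' => /(_ r s); rewrite !mxE => hrs.
  rewrite -[X in _ = _ * X]hrs.
  have d0' := d0; rewrite ht0' in d0'; rewrite ht0'.
  field; by rewrite -[1]opprK.  
- move=> j; rewrite -[A j]mulmx1 -sumE mulmx_sumr; apply: eq_bigr => i _.
  by rewrite AE hP.
- exact: rk.
Qed.

End Alg.

Lemma omegab_rect : omegab = - 2^-1 - 'i * (sqrtC 3 / 2).
Proof.
rewrite /omegab (_ : omega = - 2^-1 + 'i * (sqrtC 3 / 2)); last by rewrite /omega; field.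
rewrite conjC_rect //.
  by rewrite rpredN ger0_real // invr_ge0 ler0n.
by rewrite ger0_real // divr_ge0 ?sqrtC_ge0 ?ler0n.
Qed.

Lemma omegabE : omegab = omega ^+ 2.
Proof.
have r2 : sqrtC 3 ^+ 2 = 3 :> algC by rewrite sqrtCK.
rewrite omegab_rect /omega.
set r := sqrtC 3 in r2 *.
have -> : ((-1 + r * 'i) / 2) ^+ 2 = (1 - 2 * r * 'i + r ^+ 2 * 'i ^+ 2) / 4 by field.
by rewrite r2 sqrCi; field.
Qed.

Lemma omega3 : omega ^+ 3 = 1.
Proof.
have r2 : sqrtC 3 ^+ 2 = 3 :> algC by rewrite sqrtCK.
rewrite /omega; set r := sqrtC 3 in r2 *.
have -> : ((-1 + r * 'i) / 2) ^+ 3 = (-1 + 3 * r * 'i - 3 * r ^+ 2 * 'i ^+ 2 + r ^+ 2 * r * 'i ^+ 2 * 'i) / 8 by field.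
by rewrite r2 sqrCi; field.
Qed.

Lemma omega1 : omega != 1.
Proof.
apply/eqP => h.
have : 1 + omega + omega ^+ 2 = 0.
  by rewrite -omegabE omegab_rect /omega; field.
rewrite h expr1n => /eqP; rewrite (_ : 1 + 1 + 1 = 3%:R) ?pnatr_eq0 //.
by ring.
Qed.

Section Inst.
Variables (F : finFieldType) (a : F).
Hypotheses (h4 : #|F| = 4%N) (ha3 : a ^+ 3 = 1) (ha1 : a != 1).

Lemma nzC (x : algC) (k : nat) : x = k.+1%:R -> x != 0.
Proof. by move=> ->; rewrite pnatr_eq0. Qed.

Ltac caseI := let hi := fresh "hi" in case=> [[|[|[|[|[|[|//]]]]]] hi].

Lemma part2 : has_char_table 2 a (tbl P_GU2) (mults m_GU2).
Proof.
have hu : uniq (Lc 2) by vm_compute.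
have hN : #|{: Phi F 2}| = 9%N by rewrite (card_Phi h4 ha3 ha1 hu).
have hA0 := adj0 a 2.
have pa := fun j k ws => @prod_adj F a h4 ha3 ha1 2 j k ws hu.
have hA2 : adj 2 a 1 *m adj 2 a 1 = adj 2 a 2.
  rewrite (pa _ _ [:: 0; 0; 1; 0; 0; 0]%N); last by vm_compute.
  by rewrite sum6M /=; apply/matrixP => r s; rewrite !mxE; ring.
have hS3 : adj 2 a 1 *m adj 2 a 2 = 1%:M.
  rewrite (pa _ _ [:: 1; 0; 0; 0; 0; 0]%N); last by vm_compute.
  by rewrite sum6M /= hA0; apply/matrixP => r s; rewrite !mxE; ring.
have hA5 : adj 2 a 3 *m adj 2 a 1 = adj 2 a 5.
  rewrite (pa _ _ [:: 0; 0; 0; 0; 0; 1]%N); last by vm_compute.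
  by rewrite sum6M /=; apply/matrixP => r s; rewrite !mxE; ring.
have hA4 : adj 2 a 3 *m adj 2 a 2 = adj 2 a 4.
  rewrite (pa _ _ [:: 0; 0; 0; 0; 1; 0]%N); last by vm_compute.
  by rewrite sum6M /=; apply/matrixP => r s; rewrite !mxE; ring.
have hC : adj 2 a 1 *m adj 2 a 3 = adj 2 a 5.
  rewrite (pa _ _ [:: 0; 0; 0; 0; 0; 1]%N); last by vm_compute.
  by rewrite sum6M /=; apply/matrixP => r s; rewrite !mxE; ring.
have hT2 : adj 2 a 3 *m adj 2 a 3 = 2%:R *: 1%:M + adj 2 a 3 + 0%:R *: (adj 2 a 4 + adj 2 a 5).
  rewrite (pa _ _ [:: 2; 0; 0; 1; 0; 0]%N); last by vm_compute.
  by rewrite sum6M /= hA0; apply/matrixP => r s; rewrite !mxE; ring.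
have hJ : \sum_(j < 6) adj 2 a j = const_mx 1.
  by apply: (sum_adj h4 ha3 ha1 hu); vm_compute.
have htr : forall j : 'I_6, j != 0 -> \tr (adj 2 a j) = 0.
  by move=> j hj; apply: (tr_adj h4 ha3 ha1 hu) => //; vm_compute.
have w3 := omega3; have w1 := omega1.
apply: (@gen_char_table F 2 a omega 2 0 2 (-1) 2 (-1) w3 w1 hA0 hA2 hS3 hA5 hA4 hC hT2) => //.
- by caseI; rewrite /tv /tq /sv /= ?(w4 w3) ?(w2E w3 w1); ring.
- by caseI; rewrite /tv /tq /=; ring.
- by apply: (nzC (k := 2)); ring.
- by apply: (nzC (k := 2)); ring.
- by rewrite hN; ring.
- by caseI; rewrite /tv /tq /mults /= hN; field.
- by caseI.
- by caseI; caseI; rewrite /tbl /eig /sv /tv /kk /ee /= ?omegabE ?(w4 w3); ring.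
Qed.
Lemma part3 : has_char_table 3 a (tbl P_GU3) (mults m_GU3).
Proof.
have hu : uniq (Lc 3) by vm_compute.
have hN : #|{: Phi F 3}| = 27%N by rewrite (card_Phi h4 ha3 ha1 hu).
have hA0 := adj0 a 3.
have pa := fun j k ws => @prod_adj F a h4 ha3 ha1 3 j k ws hu.
have hA2 : adj 3 a 1 *m adj 3 a 1 = adj 3 a 2.
  rewrite (pa _ _ [:: 0; 0; 1; 0; 0; 0]%N); last by vm_compute.
  by rewrite sum6M /=; apply/matrixP => r s; rewrite !mxE; ring.
have hS3 : adj 3 a 1 *m adj 3 a 2 = 1%:M.
  rewrite (pa _ _ [:: 1; 0; 0; 0; 0; 0]%N); last by vm_compute.
  by rewrite sum6M /= hA0; apply/matrixP => r s; rewrite !mxE; ring.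
have hA5 : adj 3 a 3 *m adj 3 a 1 = adj 3 a 5.
  rewrite (pa _ _ [:: 0; 0; 0; 0; 0; 1]%N); last by vm_compute.
  by rewrite sum6M /=; apply/matrixP => r s; rewrite !mxE; ring.
have hA4 : adj 3 a 3 *m adj 3 a 2 = adj 3 a 4.
  rewrite (pa _ _ [:: 0; 0; 0; 0; 1; 0]%N); last by vm_compute.
  by rewrite sum6M /=; apply/matrixP => r s; rewrite !mxE; ring.
have hC : adj 3 a 1 *m adj 3 a 3 = adj 3 a 5.
  rewrite (pa _ _ [:: 0; 0; 0; 0; 0; 1]%N); last by vm_compute.
  by rewrite sum6M /=; apply/matrixP => r s; rewrite !mxE; ring.
have hT2 : adj 3 a 3 *m adj 3 a 3 = 8%:R *: 1%:M + adj 3 a 3 + 3%:R *: (adj 3 a 4 + adj 3 a 5).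
  rewrite (pa _ _ [:: 8; 0; 0; 1; 3; 3]%N); last by vm_compute.
  by rewrite sum6M /= hA0; apply/matrixP => r s; rewrite !mxE; ring.
have hJ : \sum_(j < 6) adj 3 a j = const_mx 1.
  by apply: (sum_adj h4 ha3 ha1 hu); vm_compute.
have htr : forall j : 'I_6, j != 0 -> \tr (adj 3 a j) = 0.
  by move=> j hj; apply: (tr_adj h4 ha3 ha1 hu) => //; vm_compute.
have w3 := omega3; have w1 := omega1.
apply: (@gen_char_table F 3 a omega 8 3 8 (-1) (-4) 2 w3 w1 hA0 hA2 hS3 hA5 hA4 hC hT2) => //.
- by caseI; rewrite /tv /tq /sv /= ?(w4 w3) ?(w2E w3 w1); ring.
- by caseI; rewrite /tv /tq /=; ring.
- by apply: (nzC (k := 8)); ring.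
- by rewrite -oppr_eq0; apply: (nzC (k := 5)); ring.
- by rewrite hN; ring.
- by caseI; rewrite /tv /tq /mults /= hN; field.
- by caseI.
- by caseI; caseI; rewrite /tbl /eig /sv /tv /kk /ee /= ?omegabE ?(w4 w3); ring.
Qed.
End Inst.

Theorem mainTheorem16 (F : finFieldType) (a : F) :
  #|F| = 4%N -> a ^+ 3 = 1 -> a != 1 ->
  @has_char_table F 2 a (tbl P_GU2) (mults m_GU2) /\
  @has_char_table F 3 a (tbl P_GU3) (mults m_GU3).
Proof. by move=> h4 ha3 ha1; split; [apply: part2 | apply: part3]. Qed.
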